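(* Let $m,t\in\mathbb{N}$ with $m\le t$. For every tree $T$ on $t$ vertices there exist subtrees $S_0,S_1,\dots,S_\ell$ of $T$ whose edge sets partition $E(T)$, such that $|S_0|=m$ and $\ell\le \log_{3/2} t$. Moreover $|V(S_0)\cap V(S_j)|=1$ for every $j\in[\ell]$.
   Context: $|S|$ denotes the number of vertices of $S$; $[\ell]=\{1,\dots,\ell\}$. *)

(* Defs.v *)
From Stdlib Require Import Reals.
From mathcomp Require Import all_boot.

Set Implicit Arguments.
Unset Strict Implicit.
Unset Printing Implicit Defensive.

Section Graphs.
Variable V : finType.

Definition is_graph (A : {set V}) (F : {set {set V}}) : Prop :=
  forall f, f \in F -> (#|f| == 2) && (f \subset A).

Definition adj (F : {set {set V}}) : rel V := fun x y => [set x; y] \in F.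

Definition gconnected (A : {set V}) (F : {set {set V}}) : Prop :=
  forall x y, x \in A -> y \in A -> connect (adj F) x y.

Definition acyclic (F : {set {set V}}) : Prop :=
  forall c : seq V, uniq c -> 2 < size c -> ~~ cycle (adj F) c.

Definition is_tree (A : {set V}) (F : {set {set V}}) : Prop :=
  [/\ is_graph A F, A != set0, gconnected A F & acyclic F].

Definition is_subtree (A : {set V}) (F : {set {set V}})
    (B : {set V}) (G : {set {set V}}) : Prop :=
  [/\ B \subset A, G \subset F & is_tree B G].

End Graphs.

(* Main.v *)
Require Import Defs.
From Stdlib Require Import Reals Lra.
From mathcomp Require Import all_boot zify.
Set Implicit Arguments.
Unset Strict Implicit.
Unset Printing Implicit Defensive.


Section Basic.
Variable V : finType.
Implicit Types (A W : {set V}) (F G : {set {set V}}).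

Lemma adjC F x y : adj F x y = adj F y x.
Proof. by rewrite /adj setUC. Qed.

Lemma adj_sym F : connect_sym (adj F).
Proof. apply: sym_connect_sym => x y; exact: adjC. Qed.

Lemma adj_graph A F x y : is_graph A F -> adj F x y -> [/\ x \in A, y \in A & x != y].
Proof.
move=> gF /gF /andP[c2 /subsetP sub]; split.
- by apply: sub; rewrite !inE eqxx.
- by apply: sub; rewrite !inE eqxx orbT.
by move: c2; rewrite cards2; case: (x != y).
Qed.

Lemma edge_form A F f : is_graph A F -> f \in F -> exists x y, x != y /\ f = [set x; y].
Proof. by move=> gF /gF /andP[/cards2P]. Qed.

Lemma acyclic_sub F F' : F' \subset F -> acyclic F -> acyclic F'.
Proof.
move=> sFF aF c uc sc; apply: contraNN (aF c uc sc); apply: sub_cycle => x y.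
by rewrite /adj => /(subsetP sFF).
Qed.

Lemma graph_sub A F F' : F' \subset F -> is_graph A F -> is_graph A F'.
Proof. by move=> sFF gF f /(subsetP sFF) /gF. Qed.

Lemma connect_in A F x y : is_graph A F -> x \in A -> connect (adj F) x y -> y \in A.
Proof.
move=> gF xA cxy; rewrite -(closed_connect _ cxy) //.
by move=> u v /(adj_graph gF) [-> ->].
Qed.

Lemma connect_mono F F' x y : F \subset F' -> connect (adj F) x y -> connect (adj F') x y.
Proof.
move=> sFF; apply: connect_sub => u v h; apply: connect1.
by move: h; rewrite /adj => /(subsetP sFF).
Qed.

Lemma tree_neighbor W G r : is_tree W G -> r \in W -> 1 < #|W| ->
  exists c, [set r; c] \in G.
Proof.
case=> gG _ cG _ rW.
rewrite (cardsD1 r) rW ltnS card_gt0 => /set0Pn [x]; rewrite !inE => /andP[xr xW].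
have /connectP [[|y p] pth ex] := cG _ _ rW xW.
  by rewrite ex eqxx in xr.
by move: pth => /= /andP[h _]; exists y.
Qed.

Lemma tree_edges_nonempty W G x y : is_tree W G -> x \in W -> y \in W -> x != y -> G != set0.
Proof.
case=> gG _ cG _ xW yW xy.
have /connectP [[|z p] pth ex] := cG _ _ xW yW.
  by rewrite ex eqxx in xy.
by move: pth => /= /andP[h _]; apply/set0Pn; exists [set x; z].
Qed.

Lemma tree_subtree W G B H : is_tree B H -> B \subset W -> H \subset G -> is_subtree W G B H.
Proof. by move=> tB sB sH; split. Qed.

Lemma subtree_trans W G B H B' H' : is_subtree B H B' H' -> B \subset W -> H \subset G ->
  is_subtree W G B' H'.
Proof.
case=> s1 s2 t sB sH; split => //; [exact: subset_trans s1 sB | exact: subset_trans s2 sH].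
Qed.

Lemma glue_tree A1 F1 A2 F2 v : is_tree A1 F1 -> is_tree A2 F2 -> v \in A1 -> v \in A2 ->
  acyclic (F1 :|: F2) -> is_tree (A1 :|: A2) (F1 :|: F2).
Proof.
case=> g1 _ c1 _ [g2 _ c2 _] v1 v2 ac; split => //.
- move=> f; rewrite inE => /orP[/g1|/g2] /andP[-> s] /=;
  by apply: subset_trans s _; rewrite ?subsetUl ?subsetUr.
- by apply/set0Pn; exists v; rewrite inE v1.
have L1 x : x \in A1 -> connect (adj (F1 :|: F2)) x v.
  by move=> xA; apply: connect_mono (subsetUl _ _) (c1 _ _ xA v1).
have L2 x : x \in A2 -> connect (adj (F1 :|: F2)) x v.
  by move=> xA; apply: connect_mono (subsetUr _ _) (c2 _ _ xA v2).
have L x : x \in A1 :|: A2 -> connect (adj (F1 :|: F2)) x v.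
  by rewrite inE => /orP[/L1|/L2].
move=> x y xA yA; apply: connect_trans (L _ xA) _.
by rewrite adj_sym; apply: L.
Qed.

Lemma single_tree r : is_tree [set r] (set0 : {set {set V}}).
Proof.
split.
- by move=> f; rewrite inE.
- by apply/set0Pn; exists r; rewrite inE.
- by move=> x y; rewrite !inE => /eqP -> /eqP ->.
by move=> [|x [|y c]] //= _ _; rewrite /adj inE.
Qed.

End Basic.
Section Split.
Variable V : finType.
Variables (W : {set V}) (G : {set {set V}}) (r c : V).
Hypotheses (tW : is_tree W G) (rW : r \in W) (eG : [set r; c] \in G).

Let e := [set r; c].
Let G' := G :\ e.
Definition Cs := [set x | connect (adj G') c x].
Definition Rs := W :\: Cs.
Definition GC := [set f in G | f \subset Cs].
Definition GR := [set f in G | f \subset Rs].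

Let gG : is_graph W G. Proof. by case: tW. Qed.
Let gG' : is_graph W G'. Proof. exact: graph_sub (subsetDl _ _) gG. Qed.
Let cG : gconnected W G. Proof. by case: tW. Qed.
Let aG : acyclic G. Proof. by case: tW. Qed.

Lemma split_rc : r != c.
Proof. by have [] := adj_graph gG eG. Qed.

Lemma split_cW : c \in W.
Proof. by have [] := adj_graph gG eG. Qed.

Lemma split_cC : c \in Cs.
Proof. by rewrite inE connect0. Qed.

Lemma split_CW : Cs \subset W.
Proof. by apply/subsetP => x; rewrite inE; apply: connect_in gG' split_cW. Qed.

Lemma adjG'G x y : adj G' x y -> adj G x y.
Proof. by rewrite /adj /G' in_setD1 => /andP[]. Qed.

Lemma split_rNC : r \notin Cs.
Proof.
rewrite inE; apply/negP => /connectP [p pth rl].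
move: rl; case: (shortenP pth) => {pth}p' pth uq _ rl'.
case: p' pth uq rl' => [|y [|z q]].
- by move=> _ _ /= rc; move: split_rc; rewrite rc eqxx.
- move=> /= /andP[h _] _ yr; move: h; rewrite -yr /adj /G' in_setD1 /e setUC eqxx //.
move=> pth uq rl'.
have := aG uq isT; rewrite /cycle rcons_path (sub_path adjG'G pth) /=.
move=> /negP; apply; rewrite /= in rl'; by rewrite -rl' /adj eG.
Qed.

Lemma split_clos x y : adj G' x y -> (x \in Cs) = (y \in Cs).
Proof.
move=> h; rewrite !inE; apply/idP/idP => cx.
  exact: connect_trans cx (connect1 h).
by apply: connect_trans cx _; rewrite adj_sym; apply: connect1.
Qed.

Lemma split_rR : r \in Rs.
Proof. by rewrite inE split_rNC rW. Qed.

Lemma split_cNR : c \notin Rs.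
Proof. by rewrite inE split_cC. Qed.

Lemma split_W : W = Cs :|: Rs.
Proof.
apply/setP => x; rewrite /Rs in_setU in_setD; case xC: (x \in Cs) => //=.
by rewrite (subsetP split_CW).
Qed.

Lemma split_CR : [disjoint Cs & Rs].
Proof.
rewrite -setI_eq0; apply/eqP/setP => x; rewrite /Rs in_setI in_setD in_set0.
by case: (x \in Cs).
Qed.

Lemma split_G : G = e |: (GC :|: GR).
Proof.
apply/setP => f; rewrite !inE; case fe: (f == e); first by rewrite (eqP fe) eG.
apply/idP/idP => [fG|]; last by move=> /= /orP[] /andP[].
rewrite fG /=.
have [x [y [xy fxy]]] := edge_form gG fG.
have aG'xy : adj G' x y by rewrite /adj /G' in_setD1 -fxy fe.
have [xW yW _] := adj_graph gG' aG'xy.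
rewrite fxy !subUset !sub1set /Rs !in_setD xW yW -(split_clos aG'xy) !andbT.
by case: (x \in Cs).
Qed.

Lemma pathC p x : x \in Cs -> path (adj G') x p -> path (adj GC) x p.
Proof.
elim: p x => //= y p IH x xC /andP[h pth].
have yC : y \in Cs by rewrite -(split_clos h).
have hG : [set x; y] \in G := adjG'G h.
by rewrite IH // andbT /adj /GC inE hG /= subUset !sub1set xC yC.
Qed.

Lemma pathR p x : x \in Rs -> path (adj G') x p -> path (adj GR) x p.
Proof.
elim: p x => //= y p IH x xR /andP[h pth].
have [_ yW _] := adj_graph gG' h.
have yR : y \in Rs by move: xR; rewrite /Rs !in_setD (split_clos h) yW => /andP[-> _].
have hG : [set x; y] \in G := adjG'G h.
by rewrite IH // andbT /adj /GR inE hG /= subUset !sub1set xR yR.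
Qed.

Lemma path_avoid p y : r \notin y :: p -> path (adj G) y p -> path (adj G') y p.
Proof.
elim: p y => //= z p IH y; rewrite !inE negb_or => /andP[ry rzp] /andP[h pth].
rewrite IH // andbT /adj /G' in_setD1; move: h; rewrite /adj => ->; rewrite andbT.
apply/negP => /eqP ee.
have : r \in [set y; z] by rewrite ee /e !inE eqxx.
move: rzp; rewrite !inE negb_or => /andP[rz _].
by rewrite (negbTE ry) (negbTE rz).
Qed.

Lemma split_treeC : is_tree Cs GC.
Proof.
split.
- move=> f; rewrite inE => /andP[fG ->]; by case/andP: (gG fG) => ->.
- by apply/set0Pn; exists c; exact: split_cC.
- have L x : x \in Cs -> connect (adj GC) c x.
    move=> xC; move: (xC); rewrite inE => /connectP [p pth ->].
    by apply/connectP; exists p => //; apply: pathC split_cC pth.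
  move=> x y xC yC; apply: connect_trans (L _ yC); rewrite adj_sym; exact: L.
by apply: acyclic_sub aG; apply/subsetP => f; rewrite inE => /andP[].
Qed.

Lemma split_treeR : is_tree Rs GR.
Proof.
split.
- move=> f; rewrite inE => /andP[fG ->]; by case/andP: (gG fG) => ->.
- by apply/set0Pn; exists r; exact: split_rR.
- have L x : x \in Rs -> connect (adj GR) r x.
    move=> xR; have xW : x \in W by move: xR; rewrite inE => /andP[].
    have /connectP [p pth ex] := cG rW xW.
    move: ex; case: (shortenP pth) => {pth}p' pth uq _ ex'.
    apply/connectP; exists p' => //; apply: pathR split_rR _.
    case: p' pth uq ex' => [|y q] //= /andP[h pth].
    rewrite inE negb_or => /andP[/andP[ry rq] _] ex'.
    have pq : path (adj G') y q by apply: path_avoid => //; rewrite inE negb_or ry.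
    have yc : y != c.
      apply/negP => /eqP yc; move: xR; rewrite ex' /Rs in_setD; apply/negP.
      rewrite negb_and negbK; apply/orP; left; rewrite inE.
      by apply/connectP; exists q; rewrite -?yc.
    rewrite pq andbT /adj /G' in_setD1; move: h; rewrite /adj => ->; rewrite andbT.
    apply/negP => /eqP ee.
    have : y \in [set r; y] by rewrite !inE eqxx orbT.
    by rewrite ee !inE (negbTE yc) eq_sym (negbTE ry).
  move=> x y xR yR; apply: connect_trans (L _ yR); rewrite adj_sym; exact: L.
by apply: acyclic_sub aG; apply/subsetP => f; rewrite inE => /andP[].
Qed.

Lemma split_eGC : e \notin GC.
Proof.
by rewrite /GC in_set negb_and subUset !sub1set (negbTE split_rNC) orbT.
Qed.

Lemma split_eGR : e \notin GR.
Proof.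
by rewrite /GR in_set negb_and subUset !sub1set (negbTE split_cNR) andbF orbT.
Qed.

Lemma split_GCR : [disjoint GC & GR].
Proof.
rewrite -setI_eq0; apply/eqP/setP => f; rewrite !inE.
apply/negP => /andP[/andP[fG fC] /andP[_ fR]].
have [x [y [_ fxy]]] := edge_form gG fG.
have xf : x \in f by rewrite fxy !inE eqxx.
have := (subsetP fC x xf); have := (subsetP fR x xf).
by rewrite inE => /andP[/negbTE ->].
Qed.

End Split.
Section Decomp.
Variable V : finType.
Implicit Types (W : {set V}) (G : {set {set V}}).

Record decomp W G (r : V) (m l : nat) (S : nat -> {set V} * {set {set V}}) : Prop := Decomp {
  d_sub : forall i, i <= l -> is_subtree W G (S i).1 (S i).2;
  d_disj : forall i j, i <= l -> j <= l -> i != j -> [disjoint (S i).2 & (S j).2];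
  d_cup : G = \bigcup_(i < l.+1) (S i).2;
  d_ne : forall j, 1 <= j <= l -> (S j).2 != set0;
  d_card : #|(S 0).1| = m;
  d_root : r \in (S 0).1;
  d_int : forall j, 1 <= j <= l -> #|(S 0).1 :&: (S j).1| = 1 }.

Lemma disjU (A B C : {set {set V}}) : [disjoint A & C] -> [disjoint B & C] -> [disjoint A :|: B & C].
Proof. by rewrite -!setI_eq0 setIUl setU_eq0 => -> ->. Qed.

Lemma sub_of W G B H : is_subtree W G B H -> (B \subset W) * (H \subset G).
Proof. by case. Qed.

Lemma attach W G (X1 Y1 : {set V}) (X2 Y2 : {set {set V}}) r m l S :
  is_tree Y1 Y2 -> X1 :&: Y1 = [set r] -> [disjoint X2 & Y2] -> Y2 != set0 ->
  W = X1 :|: Y1 -> G = X2 :|: Y2 -> decomp X1 X2 r m l S ->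
  decomp W G r m l.+1 (fun i => if i <= l then S i else (Y1, Y2)).
Proof.
move=> tY XY dXY Yne eW eG [Ssub Sdisj Scup Sne Scard Sroot Sint].
have sXW : X1 \subset W by rewrite eW subsetUl.
have sYW : Y1 \subset W by rewrite eW subsetUr.
have sXG : X2 \subset G by rewrite eG subsetUl.
have sYG : Y2 \subset G by rewrite eG subsetUr.
have : r \in X1 :&: Y1 by rewrite XY inE.
rewrite inE => /andP[_ rY].
split.
- move=> i il; case: ifP => hi; first exact: subtree_trans (Ssub _ hi) sXW sXG.
  exact: tree_subtree.
- have L i : i <= l -> [disjoint (S i).2 & Y2].
    by move=> hi; apply: disjointWl dXY; apply: (sub_of (Ssub _ hi)).2.
  move=> i j il jl ij; case: ifP => hi; case: ifP => hj /=.
  + exact: Sdisj.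
  + exact: L.
  + by rewrite disjoint_sym; apply: L.
  + have ei : i = l.+1 by apply/eqP; rewrite eqn_leq il /= ltnNge hi.
    have ej : j = l.+1 by apply/eqP; rewrite eqn_leq jl /= ltnNge hj.
    by move: ij; rewrite ei ej eqxx.
- rewrite big_ord_recr /= ltnn eG Scup; congr (_ :|: _).
  by apply: eq_bigr => i _ /=; rewrite -ltnS ltn_ord.
- move=> j /andP[j1 jl]; case: ifP => hj; first by apply: Sne; rewrite j1.
  exact: Yne.
- by rewrite leq0n.
- by rewrite leq0n.
move=> j /andP[j1 jl]; rewrite leq0n; case: ifP => hj /=; first by apply: Sint; rewrite j1.
apply/eqP/cards1P; exists r; apply/setP => z; rewrite !inE.
apply/andP/eqP => [[zS zY]|->]; last by split.
have : z \in X1 :&: Y1 by rewrite inE zY (subsetP (sub_of (Ssub _ (leq0n l))).1).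
by rewrite XY inE => /eqP.
Qed.

Lemma absorb W G (X1 Y1 : {set V}) (X2 Y2 : {set {set V}}) v r m m' l S :
  is_tree X1 X2 -> X1 :&: Y1 = [set v] -> [disjoint X2 & Y2] ->
  W = X1 :|: Y1 -> G = X2 :|: Y2 -> acyclic G -> r \in X1 ->
  m' = #|X1| + m - 1 -> decomp Y1 Y2 v m l S ->
  decomp W G r m' l (fun i => if i == 0 then (X1 :|: (S 0).1, X2 :|: (S 0).2) else S i).
Proof.
move=> tX XY dXY eW eG aG rX em [Ssub Sdisj Scup Sne Scard Sroot Sint].
have sXW : X1 \subset W by rewrite eW subsetUl.
have sYW : Y1 \subset W by rewrite eW subsetUr.
have sXG : X2 \subset G by rewrite eG subsetUl.
have sYG : Y2 \subset G by rewrite eG subsetUr.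
have S0 := Ssub _ (leq0n l).
have : v \in X1 :&: Y1 by rewrite XY inE.
rewrite inE => /andP[vX _].
have L j : j <= l -> X1 :&: (S j).1 \subset [set v].
  move=> jl; rewrite -XY; apply: setIS; exact: (sub_of (Ssub _ jl)).1.
have L2 j : j <= l -> [disjoint X2 & (S j).2].
  by move=> jl; apply: disjointWr dXY; exact: (sub_of (Ssub _ jl)).2.
split.
- move=> i il; case: ifP => hi /=; last exact: subtree_trans (Ssub _ il) sYW sYG.
  case: S0 => sB sH tS; split.
  + by rewrite subUset sXW (subset_trans sB sYW).
  + by rewrite subUset sXG (subset_trans sH sYG).
  apply: glue_tree tX tS vX Sroot _.
  by apply: acyclic_sub aG; rewrite subUset sXG (subset_trans sH sYG).
- move=> i j il jl ij; case: ifP => hi; case: ifP => hj /=.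
  + by move: ij; rewrite (eqP hi) (eqP hj) eqxx.
  + apply: disjU; first exact: L2.
    by apply: Sdisj => //; rewrite eq_sym hj.
  + rewrite disjoint_sym; apply: disjU; first exact: L2.
    by apply: Sdisj => //; rewrite eq_sym hi.
  + exact: Sdisj.
- rewrite eG Scup !big_ord_recl /= -setUA; congr (_ :|: (_ :|: _)).
- move=> j /andP[j1 jl]; have hj : (j == 0) = false by apply/negbTE; rewrite -lt0n.
  by rewrite hj; apply: Sne; rewrite j1.
- rewrite /= em cardsU Scard.
  suff -> : X1 :&: (S 0).1 = [set v] by rewrite cards1.
  apply/eqP; rewrite eqEsubset L //= sub1set inE vX.
  exact: Sroot.
- by rewrite /= inE rX.
move=> j /andP[j1 jl]; have hj : (j == 0) = false by apply/negbTE; rewrite -lt0n.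
rewrite hj /=.
suff -> : (X1 :|: (S 0).1) :&: (S j).1 = (S 0).1 :&: (S j).1 by apply: Sint; rewrite j1.
apply/setP => z; rewrite !inE.
case zX: (z \in X1) => //=; case zS: (z \in (S j).1); rewrite ?andbF ?orbF //=.
have : z \in [set v] by apply: (subsetP (L _ jl)); rewrite inE zX zS.
by rewrite inE => /eqP ->; rewrite Sroot.
Qed.

End Decomp.
Section Main.
Variable V : finType.
Implicit Types (W : {set V}) (G : {set {set V}}).

Definition good W G r m := exists l S, decomp W G r m l S /\ 3 ^ l <= 2 ^ l * #|W|.

Lemma good_full W G r : is_tree W G -> r \in W -> good W G r #|W|.
Proof.
move=> tW rW; exists 0, (fun _ => (W, G)); split; last by rewrite !expn0 mul1n card_gt0; apply/set0Pn; exists r.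
split.
- by move=> i _; apply: tree_subtree.
- by move=> [|i] [|j].
- by rewrite big_ord1.
- by move=> j /andP[j1 j0]; move: (leq_trans j1 j0).
- by [].
- exact: rW.
- by move=> j /andP[j1 j0]; move: (leq_trans j1 j0).
Qed.

Lemma good_one W G r : is_tree W G -> r \in W -> 1 < #|W| -> good W G r 1.
Proof.
move=> tW rW t2; have [c eG] := tree_neighbor tW rW t2.
have Gne : G != set0 by apply/set0Pn; exists [set r; c].
exists 1, (fun i => if i == 0 then ([set r], set0) else (W, G)); split; last first.
  by rewrite !expn1; lia.
split.
- move=> [|i] _ /=; last exact: tree_subtree.
  by apply: tree_subtree; [exact: single_tree | rewrite sub1set | exact: sub0set].
- move=> [|i] [|j] //= il jl ij; rewrite -setI_eq0 ?set0I ?setI0 //.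
  exfalso; move: il jl ij; clear; lia.
- by rewrite big_ord_recl big_ord1 /= set0U.
- by move=> [|j].
- by rewrite /= cards1.
- by rewrite /= inE.
by move=> [|j] //= _; rewrite (setIidPl _) ?cards1 // sub1set rW.
Qed.

Lemma combine W G (X1 Y1 : {set V}) (X2 Y2 : {set {set V}}) r m :
  is_tree X1 X2 -> is_tree Y1 Y2 -> X1 :&: Y1 = [set r] -> [disjoint X2 & Y2] ->
  W = X1 :|: Y1 -> G = X2 :|: Y2 -> acyclic G -> 1 < #|X1| -> 1 < #|Y1| -> #|X1| <= #|Y1| ->
  (forall m, 0 < m <= #|X1| -> good X1 X2 r m) ->
  (forall m, 0 < m <= #|Y1| -> good Y1 Y2 r m) ->
  0 < m <= #|W| -> good W G r m.
Proof.
move=> tX tY XY dXY eW eG aG x2 y2 xy gX gY /andP[m1 mt].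
have : r \in X1 :&: Y1 by rewrite XY inE.
rewrite inE => /andP[rX rY].
have cW : #|W| = #|X1| + #|Y1| - 1 by rewrite eW cardsU XY cards1.
have [mx|mx] := leqP m #|X1|.
  have [l [S [dS b]]] := gX m (introT andP (conj m1 mx)).
  exists l.+1, (fun i => if i <= l then S i else (Y1, Y2)); split.
    apply: attach dS => //.
    by have [c' e'] := tree_neighbor tY rY y2; apply/set0Pn; exists [set r; c'].
  have h : 3 * #|X1| <= 2 * (#|X1| + #|Y1| - 1) by lia.
  rewrite cW !expnS; apply: leq_trans (leq_mul (leqnn 3) b) _.
  by rewrite mulnCA [2 * 2 ^ l]mulnC -mulnA leq_mul2l h orbT.
have [|l [S [dS b]]] := gY (m - #|X1| + 1).
  by apply/andP; split; lia.
exists l, (fun i => if i == 0 then (X1 :|: (S 0).1, X2 :|: (S 0).2) else S i); split.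
  by apply: absorb dS => //; lia.
rewrite cW; apply: leq_trans b _; rewrite leq_mul2l; apply/orP; right; lia.
Qed.

Lemma edge_tree W G r c : is_tree W G -> [set r; c] \in G ->
  is_tree [set r; c] [set [set r; c]].
Proof.
move=> tW eG; have rc := split_rc tW eG.
split.
- by move=> f; rewrite inE => /eqP ->; rewrite cards2 rc subxx.
- by apply/set0Pn; exists r; rewrite !inE eqxx.
- have L : connect (adj [set [set r; c]]) r c by apply: connect1; rewrite /adj inE.
  have L' : connect (adj [set [set r; c]]) c r by rewrite adj_sym.
  by move=> x y; rewrite !inE => /orP[] /eqP -> /orP[] /eqP ->.
by case: tW => _ _ _ a; apply: acyclic_sub a; rewrite sub1set.
Qed.

Lemma main n : forall W G r m, #|W| <= n -> is_tree W G -> r \in W -> 0 < m <= #|W| ->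
  good W G r m.
Proof.
elim: n => [|n IH] W G r m.
  by move=> Wn _ _ /andP[m1 mt]; move: (leq_trans m1 (leq_trans mt Wn)).
move=> Wn tW rW /andP[m1 mt].
have [mt'|mt'] := eqVneq m #|W|; first by rewrite mt'; apply: good_full.
have ltm : m < #|W| by rewrite ltn_neqAle mt' mt.
have t2 : 1 < #|W| by apply: leq_trans ltm; exact: m1.
have [m1'|m2] := eqVneq m 1; first by rewrite m1'; apply: good_one.
have [c eG] := tree_neighbor tW rW t2.
set e := [set r; c].
set C := Cs G r c; set R := Rs W G r c; set GCs := GC G r c; set GRs := GR W G r c.
have tC : is_tree C GCs := split_treeC r c tW.
have tR : is_tree R GRs := split_treeR tW rW eG.
have rR : r \in R := split_rR tW rW eG.
have cC : c \in C := split_cC G r c.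
have eW : W = C :|: R := split_W tW eG.
have eGG : G = e |: (GCs :|: GRs) := split_G tW eG.
have dCR := split_CR W G r c.
have dGCR : [disjoint GCs & GRs] := split_GCR r c tW.
have aG : acyclic G by case: tW.
have rc := split_rc tW eG.
have rNC : r \notin C.
  apply/negP => rC; move: dCR; rewrite -setI_eq0 => /eqP/setP/(_ r).
  by rewrite in_setI rC rR in_set0.
set X1 := [set r; c] :|: C; set X2 := [set e] :|: GCs.
have tX : is_tree X1 X2.
  apply: glue_tree (edge_tree tW eG) tC _ cC _; first by rewrite !inE eqxx orbT.
  apply: acyclic_sub aG; rewrite eGG subUset sub1set in_setU1 eqxx /=.
  by apply/subsetP => f fC; rewrite in_setU1 in_setU fC orbT.
have eX1 : X1 = r |: C.
  apply/setP => z; rewrite /X1 in_setU1 !in_setU !in_set1; case: eqP => //= _.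
  by case: eqP => //= ->; rewrite cC.
have cX : #|X1| = #|C|.+1 by rewrite eX1 cardsU1 rNC.
have cWs : #|W| = #|C| + #|R|.
  by move: dCR; rewrite -setI_eq0 => /eqP dCR'; rewrite eW cardsU dCR' cards0 subn0.
have XR : X1 :&: R = [set r].
  apply/setP => z; rewrite eX1 in_setI in_setU1 in_set1; case: eqP => [->|zr] /=; first by rewrite rR.
  by move: dCR; rewrite -setI_eq0 => /eqP/setP/(_ z); rewrite in_setI in_set0 => ->.
have eW2 : W = X1 :|: R.
  rewrite eW eX1; apply/setP => z; rewrite !in_setU in_set1.
  by case: eqP => //= ->; rewrite rR orbT.
have eG2 : G = X2 :|: GRs by rewrite eGG setUA.
have dX : [disjoint X2 & GRs].
  apply: disjU => //; rewrite -setI_eq0; apply/eqP/setP => f; rewrite in_setI in_set1 in_set0.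
  by case: eqP => // ->; rewrite (negbTE (split_eGR W G r c)).
have [b1|b2] := leqP #|R| 1.
  have eR : R = [set r].
    apply/eqP; rewrite eq_sym eqEcard sub1set rR cards1.
    exact: b1.
  have eGR : GRs = set0.
    apply/setP => f; rewrite in_set0; apply/negP => fG.
    have /andP[f2 fR] : (#|f| == 2) && (f \subset R) by case: tR => g _ _ _; apply: g.
    by move: (subset_leq_card fR); rewrite (eqP f2) eR cards1.
  have Cn : #|C| <= n.
    by rewrite -ltnS -cX; apply: leq_trans Wn; rewrite eW2 eR; apply: subset_leq_card; rewrite subsetUl.
  have [|l [S [dS b]]] := IH C GCs c (m.-1) Cn tC cC.
    by apply/andP; split; lia.
  exists l, (fun i => if i == 0 then ([set r; c] :|: (S 0).1, [set e] :|: (S 0).2) else S i); split.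
    apply: absorb (edge_tree tW eG) _ _ _ _ aG _ _ dS.
    - apply/setP => z; rewrite in_setI in_set2 in_set1.
      case: (z =P r) => [->|zr]; first by rewrite /= (negbTE rNC) (negbTE rc).
      by case: (z =P c) => [->|zc] //=; rewrite cC.
    - rewrite -setI_eq0; apply/eqP/setP => f; rewrite in_setI in_set1 in_set0.
      by case: eqP => // ->; rewrite (negbTE (split_eGC tW eG)).
    - by rewrite eW2 eR; apply/setUidPl; rewrite sub1set /X1 !in_setU !in_set1 eqxx.
    - by rewrite eG2 eGR setU0.
    - by rewrite !inE eqxx.
    - rewrite cards2 rc; lia.
  apply: leq_trans b _; rewrite leq_mul2l; apply/orP; right; lia.
have IHX m' : 0 < m' <= #|X1| -> good X1 X2 r m'.
  move=> hm; apply: IH => //; first lia.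
  by rewrite eX1 in_setU1 eqxx.
have C1 : 0 < #|C| by rewrite card_gt0; apply/set0Pn; exists c.
have IHR m' : 0 < m' <= #|R| -> good R GRs r m'.
  by move=> hm; apply: IH => //; lia.
have [ab|ab] := leqP #|X1| #|R|.
  by apply: combine tX tR XR dX eW2 eG2 aG _ _ ab IHX IHR _ => //; lia.
apply: (@combine W G R X1 GRs X2) => //.
- by rewrite setIC.
- by rewrite disjoint_sym.
- by rewrite setUC.
- by rewrite setUC.
- lia.
- lia.
- by rewrite m1 mt.
Qed.

End Main.
Lemma expE (a n : nat) : expn a n = Nat.pow a n.
Proof. by elim: n => [|n IH] //=; rewrite expnS IH. Qed.

Section Reals.
Local Open Scope R_scope.
Lemma ln_le' (x y : R) : (0 < x) -> (x <= y) -> (ln x <= ln y).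
Proof.
move=> x0 [xy|->]; last exact: Rle_refl.
by apply: Rlt_le; apply: ln_increasing.
Qed.

Lemma real_bound (l t : nat) : (3 ^ l <= 2 ^ l * t)%N ->
  Rle (INR l) (Rdiv (ln (INR t)) (ln (Rdiv (INR 3) (INR 2)))).
Proof.
move=> h.
have t0 : (0 < t)%N by move: h; case: t => //; rewrite muln0 leqn0 expn_eq0.
have tR : (0 < INR t) by apply: lt_0_INR; apply/ltP.
have hR : (INR 3 ^ l <= INR 2 ^ l * INR t).
  rewrite -!pow_INR -mult_INR; apply: le_INR; apply/leP.
  by rewrite -!expE.
have e3 : INR 3 = 3 by rewrite /= ; lra.
have e2 : INR 2 = 2 by rewrite /= ; lra.
rewrite e3 e2 in hR *.
have l32 : ln (3 / 2) = (ln 3 - ln 2).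
  rewrite /Rdiv ln_mult; [|lra|lra]; rewrite ln_Rinv; [ring|lra].
have p32 : (0 < ln (3 / 2)).
  rewrite -ln_1; apply: ln_increasing; lra.
apply: (Rmult_le_reg_r (ln (3 / 2))) => //.
have -> : (ln (INR t) / ln (3 / 2) * ln (3 / 2) = ln (INR t)).
  by field; apply: Rgt_not_eq.
have := ln_le' (pow_lt 3 l ltac:(lra)) hR.
rewrite ln_mult; [|apply: pow_lt; lra|exact: tR].
rewrite !ln_pow; [|lra|lra].
rewrite l32; lra.
Qed.
End Reals.

Theorem corollary3p6 (V : finType) (A : {set V}) (F : {set {set V}})
    (m t : nat) :
  is_tree A F -> #|A| = t -> 1 <= m -> m <= t ->
  exists (l : nat) (S : nat -> {set V} * {set {set V}}),
    (forall i, i <= l -> is_subtree A F (S i).1 (S i).2) /\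
    (forall i j, i <= l -> j <= l -> i != j ->
        [disjoint (S i).2 & (S j).2]) /\
    F = \bigcup_(i < l.+1) (S i).2 /\
    (forall j, 1 <= j <= l -> (S j).2 != set0) /\
    #|(S 0).1| = m /\
    Rle (INR l) (Rdiv (ln (INR t)) (ln (Rdiv (INR 3) (INR 2)))) /\
    (forall j, 1 <= j <= l -> #|(S 0).1 :&: (S j).1| = 1).
Proof.
move=> tA At m1 mt.
have [r rA] : exists r, r \in A by case: tA => _ /set0Pn.
have mA : 0 < m <= #|A| by rewrite m1 At.
have [l [S [[Ssub Sdisj Scup Sne Scard Sroot Sint] b]]] := main (leqnn #|A|) tA rA mA.
exists l, S; do ! split => //.
by apply: real_bound; rewrite -At.
Qed.
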